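(* Let $(X,d)$ be a geodesic metric space and $x_0\in X$. Then the end-approximating tree $(T_X,d^* )$ of $X$ with respect to $x_0$ is an $\mathbb{R}$-tree.
   Context: For $x,y\in X$ let $(x,y)_{x_0}=\frac12(d(x_0,x)+d(x_0,y)-d(x,y))$. Let $S_{x,y}$ be the set of all finite sequences $x=x_1,x_2,\ldots,x_n=y$ in $X$ ($n\in\mathbb{N}$), and define $(x,y)'_{x_0}=\sup_{S_{x,y}}\min_{1\leqslant i\leqslant n-1}(x_i,x_{i+1})_{x_0}$ and $d'(x,y)=d(x_0,x)+d(x_0,y)-2(x,y)'_{x_0}$; $d'$ is a pseudometric. The end-approximating tree $T_X$ is the quotient $X/\sim$, where $x\sim y$ iff $d'(x,y)=0$, with metric $d^*([x],[y])=d'(x,y)$. An $\mathbb{R}$-tree is a metric space in which any two points are joined by a unique topological arc, and this arc is a geodesic. *)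

(* Defs.v *)
From Stdlib Require Import Reals Lra List ClassicalEpsilon.
From Coquelicot Require Import Coquelicot.
Open Scope R_scope.

Section Defs.
Context {T : Type} (dist : T -> T -> R).

Definition is_metric : Prop :=
  (forall x y, 0 <= dist x y) /\
  (forall x y, dist x y = 0 <-> x = y) /\
  (forall x y, dist x y = dist y x) /\
  (forall x y z, dist x z <= dist x y + dist y z).

Definition isometric_on (L : R) (g : R -> T) : Prop :=
  forall s t, 0 <= s <= L -> 0 <= t <= L -> dist (g s) (g t) = Rabs (s - t).

Definition geodesic_space : Prop :=
  forall x y, exists g : R -> T,
    g 0 = x /\ g (dist x y) = y /\ isometric_on (dist x y) g.

Definition continuous_on_interval (L : R) (f : R -> T) : Prop :=
  forall s, 0 <= s <= L -> forall eps, 0 < eps -> exists delta, 0 < delta /\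
    forall t, 0 <= t <= L -> Rabs (t - s) < delta -> dist (f t) (f s) < eps.

(** [A] is a topological arc from [x] to [y]: the image of a continuous
    injective map on a compact interval [0, L] sending 0 to x and L to y.
    (When x = y injectivity forces L = 0 and A = {x}.) *)
Definition is_arc (x y : T) (A : T -> Prop) : Prop :=
  exists (L : R) (f : R -> T), 0 <= L /\ f 0 = x /\ f L = y /\
    continuous_on_interval L f /\
    (forall s t, 0 <= s <= L -> 0 <= t <= L -> f s = f t -> s = t) /\
    (forall p, A p <-> exists t, 0 <= t <= L /\ f t = p).

Definition is_geodesic_set (x y : T) (A : T -> Prop) : Prop :=
  exists g : R -> T, g 0 = x /\ g (dist x y) = y /\ isometric_on (dist x y) g /\
    (forall p, A p <-> exists t, 0 <= t <= dist x y /\ g t = p).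

Definition is_Rtree : Prop :=
  is_metric /\
  forall x y, exists A, is_arc x y A /\
    (forall B, is_arc x y B -> forall p, B p <-> A p) /\
    is_geodesic_set x y A.
End Defs.

Section EndTree.
Context {X : Type} (d : X -> X -> R) (x0 : X).

Definition gromov (x y : X) : R := (d x0 x + d x0 y - d x y) / 2.

Fixpoint chain_min (a : X) (l : list X) : R :=
  match l with
  | nil => 0 (* never used: sequences have n >= 2 *)
  | b :: l' =>
      match l' with
      | nil => gromov a b
      | _ :: _ => Rmin (gromov a b) (chain_min b l')
      end
  end.

(** the values min_i (x_i,x_{i+1})_{x0} over finite sequences
    x = x_1, x_2, ..., x_n = y with n >= 2, encoded as x :: l *)
Definition chain_values (x y : X) : R -> Prop :=
  fun r => exists l : list X, l <> nil /\ last l x = y /\ r = chain_min x l.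

Definition gromov' (x y : X) : R := real (Lub_Rbar (chain_values x y)).

Definition dprime (x y : X) : R := d x0 x + d x0 y - 2 * gromov' x y.

(** T_X = X / ~ where x ~ y iff d'(x,y) = 0; a point is an equivalence class *)
Definition TX : Type :=
  { P : X -> Prop | exists x : X, P = (fun z => dprime x z = 0) }.

Definition TX_rep (A : TX) : X :=
  proj1_sig (constructive_indefinite_description _ (proj2_sig A)).

Definition dstar (A B : TX) : R := dprime (TX_rep A) (TX_rep B).
End EndTree.

(* Main.v *)
Require Import Defs.
From Stdlib Require Import Reals Lra List Classical ClassicalEpsilon FunctionalExtensionality PropExtensionality ProofIrrelevance.
From Coquelicot Require Import Coquelicot.
Open Scope R_scope.

Section Abs.
Variables (T : Type) (D : T -> T -> R) (N : T -> R) (P : T -> T -> R) (seg : T -> R -> T).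
Hypothesis HD : forall z w, D z w = N z + N w - 2 * P z w.
Hypothesis HPs : forall z w, P z w = P w z.
Hypothesis HPu : forall x y z, Rmin (P x y) (P y z) <= P x z.
Hypothesis HPN : forall z w, P z w <= N z.
Hypothesis HP0 : forall z w, 0 <= P z w.
Hypothesis HPz : forall z, P z z = N z.
Hypothesis HDeq : forall z w, D z w = 0 -> z = w.
Hypothesis Hseg : forall z t, 0 <= t <= N z -> N (seg z t) = t /\ t <= P (seg z t) z.

Lemma um x y z : P x y <= P x z \/ P y z <= P x z.
Proof. generalize (HPu x y z). unfold Rmin; destruct (Rle_dec _ _); lra. Qed.
Lemma PN' z w : P z w <= N w.
Proof. rewrite HPs; apply HPN. Qed.
Lemma Dzz z : D z z = 0.
Proof. rewrite HD, HPz; lra. Qed.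
Lemma Dge0 z w : 0 <= D z w.
Proof. rewrite HD; pose proof (HPN z w); pose proof (PN' z w); lra. Qed.
Lemma Dsym z w : D z w = D w z.
Proof. rewrite !HD, (HPs z w); lra. Qed.
Lemma Dtri x y z : D x z <= D x y + D y z.
Proof. rewrite !HD. destruct (um x y z); pose proof (PN' x y); pose proof (HPN y z); lra. Qed.
Lemma Nlip z w : N z - N w <= D z w.
Proof. rewrite HD; pose proof (PN' z w); lra. Qed.
Lemma Plip a b X : P a X - P b X <= D a b.
Proof.
  pose proof (HD a X); pose proof (HD b X); pose proof (Dtri b a X);
  pose proof (Nlip a b); pose proof (Dsym a b); lra.
Qed.
Lemma uniq z w w' : N w = N w' -> N w <= P w z -> N w' <= P w' z -> w = w'.
Proof.
  intros H1 H2 H3. apply HDeq. pose proof (Dge0 w w'). rewrite HD in *.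
  pose proof (HPs z w'); destruct (um w z w'); lra.
Qed.

Definition below w z := N w <= P w z.
Definition onseg X Y w := (below w X \/ below w Y) /\ P X Y <= N w.

Lemma Rabs_le_eq s t : s <= t -> Rabs (s - t) = t - s.
Proof. intros; unfold Rabs; destruct (Rcase_abs _); lra. Qed.
Lemma Rabs_ge_eq s t : t <= s -> Rabs (s - t) = s - t.
Proof. intros; unfold Rabs; destruct (Rcase_abs _); lra. Qed.

Lemma same_side z u v : below u z -> below v z -> D u v = Rabs (N u - N v).
Proof.
  unfold below; intros Hu Hv. rewrite HD.
  pose proof (HPN u v); pose proof (PN' u v). pose proof (HPs z v); destruct (um u z v);
  destruct (Rle_dec (N u) (N v)); [rewrite Rabs_le_eq by lra | rewrite Rabs_ge_eq by lra|
   rewrite Rabs_le_eq by lra | rewrite Rabs_ge_eq by lra]; lra.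
Qed.

Section Geo.
Variables A B : T.

Lemma mixed u v : below u A -> below v B -> P A B <= N u -> P A B <= N v ->
  D u v = N u + N v - 2 * P A B.
Proof.
  unfold below; intros Hu Hv Hcu Hcv. rewrite HD.
  assert (P u v = P A B); [|lra].
  pose proof (HPN u v); pose proof (PN' u v).
  pose proof (HPs A u); pose proof (HPs v B); pose proof (HPs B v);
  destruct (um u B v); destruct (um u A B); destruct (um A v B); destruct (um A u v); lra.
Qed.

Definition g t := if Rle_dec t (N A - P A B) then seg A (N A - t)
  else seg B (t - N A + 2 * P A B).

Lemma g_props t : 0 <= t <= D A B ->
  (t <= N A - P A B /\ below (g t) A /\ N (g t) = N A - t) \/
  (N A - P A B < t /\ below (g t) B /\ N (g t) = t - N A + 2 * P A B).
Proof.
  intros Ht. pose proof (HPN A B); pose proof (PN' A B); pose proof (HP0 A B).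
  rewrite HD in Ht. unfold g, below. destruct (Rle_dec t (N A - P A B)).
  - left. destruct (Hseg A (N A - t)) as [E1 E2]; [lra|]. rewrite E1. lra.
  - right. destruct (Hseg B (t - N A + 2 * P A B)) as [E1 E2]; [lra|]. rewrite E1. lra.
Qed.

Lemma g_iso : isometric_on D (D A B) g.
Proof.
  intros s t Hs Ht. pose proof (HD A B).
  destruct (g_props s Hs) as [[s1 [s2 s3]]|[s1 [s2 s3]]];
  destruct (g_props t Ht) as [[t1 [t2 t3]]|[t1 [t2 t3]]].
  - rewrite (same_side A) by auto. rewrite s3, t3.
    replace (N A - s - (N A - t)) with (t - s) by ring; apply Rabs_minus_sym.
  - rewrite (mixed (g s) (g t)); auto; try lra. rewrite s3, t3, Rabs_le_eq; lra.
  - rewrite Dsym, (mixed (g t) (g s)); auto; try lra. rewrite s3, t3, Rabs_ge_eq; lra.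
  - rewrite (same_side B) by auto. rewrite s3, t3. f_equal; ring.
Qed.

Lemma g0 : g 0 = A.
Proof.
  pose proof (HPN A B); pose proof (PN' A B); pose proof (HP0 A B).
  destruct (g_props 0) as [[t1 [t2 t3]]|[t1 [t2 t3]]]; [split; [lra| apply Dge0]| |lra].
  pose proof (HPz A); apply (uniq A); auto; unfold below in *; lra.
Qed.

Lemma gD : g (D A B) = B.
Proof.
  pose proof (HPN A B); pose proof (PN' A B); pose proof (HP0 A B); pose proof (HD A B).
  pose proof (Dge0 A B).
  destruct (g_props (D A B)) as [[t1 [t2 t3]]|[t1 [t2 t3]]]; [lra| |].
  - pose proof (HPs B A); apply (uniq A); auto; unfold below in *; lra.
  - pose proof (HPz B); apply (uniq B); auto; unfold below in *; lra.
Qed.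

Lemma g_img p : onseg A B p <-> exists t, 0 <= t <= D A B /\ g t = p.
Proof.
  pose proof (HPN A B); pose proof (PN' A B); pose proof (HP0 A B); pose proof (HD A B).
  split.
  - intros [HAB Hc].
    assert (KA : below p A -> exists t, 0 <= t <= D A B /\ g t = p).
    { intros HA. unfold below in HA. pose proof (HPN p A); pose proof (PN' p A).
      exists (N A - N p). assert (Ht : 0 <= N A - N p <= D A B) by lra. split; auto.
      destruct (g_props _ Ht) as [[t1 [t2 t3]]|[t1 [t2 t3]]]; [|lra].
      apply (uniq A); unfold below in *; auto; lra. }
    destruct HAB as [HA|HB]; auto.
    unfold below in HB. pose proof (HPN p B); pose proof (PN' p B).
    destruct (Rle_dec (N p) (P A B)).
    + apply KA. unfold below. pose proof (HPs B A); destruct (um p B A); lra.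
    + exists (N p - 2 * P A B + N A). assert (Ht : 0 <= N p - 2 * P A B + N A <= D A B) by lra.
      split; auto.
      destruct (g_props _ Ht) as [[t1 [t2 t3]]|[t1 [t2 t3]]]; [lra|].
      apply (uniq B); unfold below in *; auto; lra.
  - intros [t [Ht E]]. subst p.
    destruct (g_props _ Ht) as [[t1 [t2 t3]]|[t1 [t2 t3]]]; split; auto; lra.
Qed.

Lemma g_arc : is_arc D A B (onseg A B).
Proof.
  exists (D A B), g. split; [apply Dge0|]. split; [apply g0|]. split; [apply gD|].
  split; [|split].
  - intros s Hs eps He. exists eps. split; auto. intros t Ht Hts.
    rewrite g_iso; auto.
  - intros s t Hs Ht E. pose proof (g_iso s t Hs Ht). rewrite E, Dzz in H.
    unfold Rabs in H; destruct (Rcase_abs _); lra.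
  - intros p; apply g_img.
Qed.

Lemma g_geo : is_geodesic_set D A B (onseg A B).
Proof.
  exists g. split; [apply g0|]. split; [apply gD|]. split; [apply g_iso|].
  intros p; apply g_img.
Qed.
End Geo.

Lemma phi_cont L f X : continuous_on_interval D L f ->
  forall s, 0 <= s <= L -> forall eps, 0 < eps -> exists delta, 0 < delta /\
    forall t, 0 <= t <= L -> Rabs (t - s) < delta -> Rabs (P (f t) X - P (f s) X) < eps.
Proof.
  intros Hc s Hs eps He. destruct (Hc s Hs eps He) as [delta [Hd Ht]].
  exists delta; split; auto. intros t Ht1 Ht2. specialize (Ht t Ht1 Ht2).
  pose proof (Plip (f t) (f s) X); pose proof (Plip (f s) (f t) X);
  pose proof (Dsym (f t) (f s)). apply Rabs_def1; lra.
Qed.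

Lemma pass X Y L f p : 0 <= L -> continuous_on_interval D L f -> f 0 = X -> f L = Y ->
  below p X -> P X Y <= N p -> exists t, 0 <= t <= L /\ f t = p.
Proof.
  intros HL Hc H0 HLf Hb Hc2. unfold below in Hb.
  destruct (classic (p = X)) as [E|NE].
  { exists 0; split; [lra|]. congruence. }
  assert (HNX : N p < N X).
  { pose proof (HPN p X); pose proof (PN' p X).
    destruct (Req_dec (N p) (N X)); [|lra]. exfalso; apply NE.
    pose proof (HPz X). apply (uniq X); auto; lra. }
  set (th := N p).
  set (E := fun s => 0 <= s <= L /\ forall u, 0 <= u <= s -> th < P (f u) X).
  assert (E0 : E 0).
  { split; [lra|]. intros u Hu. replace u with 0 by lra. rewrite H0, HPz. unfold th; lra. }
  destruct (completeness E) as [m [Hub Hlub]].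
  { exists L. intros x [Hx _]. lra. }
  { exists 0; auto. }
  assert (Hm0 : 0 <= m) by (apply Hub; auto).
  assert (HmL : m <= L) by (apply Hlub; intros x [Hx _]; lra).
  assert (K : forall u, 0 <= u < m -> th < P (f u) X).
  { intros u Hu. destruct (Rlt_dec th (P (f u) X)) as [Hlt|Hnlt]; auto. exfalso.
    assert (m <= u); [|lra]. apply Hlub. intros x [Hx1 Hx2].
    destruct (Rle_dec x u); auto. exfalso. apply Hnlt. apply Hx2. lra. }
  assert (Hphi0 : th < P (f 0) X) by (rewrite H0, HPz; unfold th; lra).
  assert (Hle : P (f m) X <= th).
  { destruct (Rle_dec (P (f m) X) th) as [|Hn]; auto. exfalso.
    destruct (phi_cont L f X Hc m (conj Hm0 HmL) (P (f m) X - th)) as [delta [Hd Hdt]]; [lra|].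
    assert (Es : E (Rmin L (m + delta / 2))).
    { split. { unfold Rmin; destruct (Rle_dec _ _); lra. }
      intros u Hu. destruct (Rlt_dec u m); [apply K; lra|].
      assert (Hu2 : u <= m + delta / 2 /\ u <= L) by (unfold Rmin in Hu; destruct (Rle_dec _ _); lra).
      assert (Hr : Rabs (u - m) < delta) by (apply Rabs_def1; lra).
      specialize (Hdt u (conj (proj1 Hu) (proj2 Hu2)) Hr).
      apply Rabs_def2 in Hdt. lra. }
    apply Hub in Es. assert (m = L) by (unfold Rmin in Es; destruct (Rle_dec _ _); lra).
    subst m. rewrite HLf, HPs in Hn. unfold th in Hn. lra. }
  assert (Hmpos : 0 < m).
  { destruct (Req_dec m 0); [|lra]. subst m. lra. }
  assert (Hge : th <= P (f m) X).
  { destruct (Rle_dec th (P (f m) X)) as [|Hn]; auto. exfalso.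
    destruct (phi_cont L f X Hc m (conj Hm0 HmL) (th - P (f m) X)) as [delta [Hd Hdt]]; [lra|].
    set (u := Rmax 0 (m - delta / 2)).
    assert (Hu : 0 <= u < m /\ m - delta / 2 <= u) by (unfold u, Rmax; destruct (Rle_dec _ _); lra).
    assert (Hr : Rabs (u - m) < delta) by (apply Rabs_def1; lra).
    specialize (Hdt u (conj (proj1 (proj1 Hu)) (Rlt_le _ _ (Rlt_le_trans _ _ _ (proj2 (proj1 Hu)) HmL))) Hr).
    apply Rabs_def2 in Hdt. specialize (K u (proj1 Hu)). lra. }
  set (w := f m).
  assert (Hpw : N p <= P p w).
  { pose proof (HPs X w). destruct (um p X w); unfold w, th in *; lra. }
  destruct (classic (w = p)) as [Ew|NEw].
  { exists m; split; [lra|]; auto. }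
  exfalso.
  assert (HNw : N p < N w).
  { pose proof (PN' p w). destruct (Req_dec (N p) (N w)); [|lra]. exfalso; apply NEw.
    symmetry. pose proof (HPz w). apply (uniq w); auto; lra. }
  destruct (Hc m (conj Hm0 HmL) (N w - th)) as [delta [Hd Hdt]]; [unfold th; lra|].
  set (u := Rmax 0 (m - delta / 2)).
  assert (Hu : 0 <= u < m /\ m - delta / 2 <= u) by (unfold u, Rmax; destruct (Rle_dec _ _); lra).
  assert (Hr : Rabs (u - m) < delta) by (apply Rabs_def1; lra).
  specialize (Hdt u (conj (proj1 (proj1 Hu)) (Rlt_le _ _ (Rlt_le_trans _ _ _ (proj2 (proj1 Hu)) HmL))) Hr).
  specialize (K u (proj1 Hu)). fold w in Hdt.
  pose proof (HD (f u) w). pose proof (Nlip w (f u)). pose proof (Dsym w (f u)).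
  pose proof (HPs w (f u)).
  destruct (um w (f u) X); unfold w, th in *; lra.
Qed.

Lemma rev_cont L f : continuous_on_interval D L f -> continuous_on_interval D L (fun s => f (L - s)).
Proof.
  intros Hc s Hs eps He. destruct (Hc (L - s) ltac:(lra) eps He) as [delta [Hd Ht]].
  exists delta; split; auto. intros t Ht1 Ht2. apply Ht; [lra|].
  replace (L - t - (L - s)) with (- (t - s)) by ring. rewrite Rabs_Ropp; auto.
Qed.

Lemma restr_cont L a f : 0 <= a <= L -> continuous_on_interval D L f -> continuous_on_interval D a f.
Proof.
  intros Ha Hc s Hs eps He. destruct (Hc s ltac:(lra) eps He) as [delta [Hd Ht]].
  exists delta; split; auto. intros t Ht1 Ht2. apply Ht; auto; lra.
Qed.

Lemma shift_cont L a f : 0 <= a <= L -> continuous_on_interval D L f ->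
  continuous_on_interval D (L - a) (fun s => f (a + s)).
Proof.
  intros Ha Hc s Hs eps He. destruct (Hc (a + s) ltac:(lra) eps He) as [delta [Hd Ht]].
  exists delta; split; auto. intros t Ht1 Ht2. apply Ht; [lra|].
  replace (a + t - (a + s)) with (t - s) by ring. auto.
Qed.

Lemma pass_on X Y L f p : 0 <= L -> continuous_on_interval D L f -> f 0 = X -> f L = Y ->
  onseg X Y p -> exists t, 0 <= t <= L /\ f t = p.
Proof.
  intros HL Hc H0 HLf [[HX|HY] Hc2].
  - eapply pass; eauto.
  - destruct (pass Y X L (fun s => f (L - s)) p HL (rev_cont L f Hc)) as [t [Ht E]].
    + rewrite Rminus_0_r; auto.
    + rewrite Rminus_diag; auto.
    + auto.
    + rewrite HPs; auto.
    + exists (L - t); split; [lra|auto].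
Qed.

Lemma arc_in X Y C : is_arc D X Y C -> forall p, C p <-> onseg X Y p.
Proof.
  intros [L [f [HL [H0 [HLf [Hc [Hinj Himg]]]]]]] p. split.
  - intros Cp. apply Himg in Cp. destruct Cp as [tq [Htq Efq]].
    assert (Key : forall r, onseg X p r -> onseg p Y r -> r = p).
    { intros r H1 H2.
      destruct (pass_on X p tq f r ltac:(lra) (restr_cont L tq f Htq Hc) H0 Efq H1) as [t1 [Ht1 E1]].
      destruct (pass_on p Y (L - tq) (fun s => f (tq + s)) r ltac:(lra) (shift_cont L tq f Htq Hc))
        as [t2 [Ht2 E2]].
      + rewrite Rplus_0_r; auto.
      + replace (tq + (L - tq)) with L by ring; auto.
      + auto.
      + assert (t1 = tq + t2) by (apply Hinj; [lra|lra|congruence]).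
        rewrite <- Efq, <- E1. f_equal; lra. }
    pose proof (HPs X p); pose proof (HPs p Y); pose proof (HPs X Y).
    pose proof (HPN p X); pose proof (PN' p X); pose proof (HP0 p X).
    pose proof (HPN p Y); pose proof (PN' p Y); pose proof (HP0 p Y).
    pose proof (HPN X Y); pose proof (PN' X Y); pose proof (HP0 X Y).
    destruct (Rle_dec (P p Y) (P p X)).
    + set (m := Rmax (P p X) (P X Y)).
      assert (Hm : P p X <= m /\ P X Y <= m /\ (m = P p X \/ m = P X Y))
        by (unfold m, Rmax; destruct (Rle_dec _ _); lra).
      destruct (Hseg X m) as [E1 E2]; [lra|].
      rewrite <- (Key (seg X m)).
      * split; [left; unfold below; lra|lra].
      * split; [left; unfold below; lra|lra].
      * split; [|lra]. unfold below.
        destruct (um (seg X m) X p); destruct (um (seg X m) X Y); lra.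
    + set (m := Rmax (P p Y) (P X Y)).
      assert (Hm : P p Y <= m /\ P X Y <= m /\ (m = P p Y \/ m = P X Y))
        by (unfold m, Rmax; destruct (Rle_dec _ _); lra).
      destruct (Hseg Y m) as [E1 E2]; [lra|].
      pose proof (HPs Y p); pose proof (HPs Y X).
      rewrite <- (Key (seg Y m)).
      * split; [right; unfold below; lra|lra].
      * split; [|lra]. unfold below.
        destruct (um (seg Y m) Y p); destruct (um (seg Y m) Y X); lra.
      * split; [right; unfold below; lra|lra].
  - intros Hp. apply Himg. eapply pass_on; eauto.
Qed.

Theorem abs_Rtree : is_Rtree D.
Proof.
  split.
  - split; [apply Dge0|]. split; [|split; [apply Dsym|apply Dtri]].
    intros x y; split; [apply HDeq|intros ->; apply Dzz].
  - intros x y. exists (onseg x y). split; [apply g_arc|]. split; [|apply g_geo].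
    intros C HC p. apply arc_in; auto.
Qed.
End Abs.

Lemma lub_props (E : R -> Prop) r0 M : E r0 -> (forall r, E r -> r <= M) ->
  (forall r, E r -> r <= real (Lub_Rbar E)) /\
  (forall M', (forall r, E r -> r <= M') -> real (Lub_Rbar E) <= M').
Proof.
  intros H0 HM. destruct (Lub_Rbar_correct E) as [Hub Hl].
  destruct (Lub_Rbar E) as [l| |] eqn:El.
  - simpl. split.
    + intros r Er. exact (Hub r Er).
    + intros M' HM'. exact (Hl (Finite M') HM').
  - exfalso. exact (Hl (Finite M) HM).
  - exfalso. exact (Hub r0 H0).
Qed.

Section Inst.
Variables (X : Type) (d : X -> X -> R) (x0 : X).
Hypothesis Hmet : is_metric d.

Lemma d_ge0 x y : 0 <= d x y. Proof. apply Hmet. Qed.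
Lemma d_xx x : d x x = 0. Proof. apply Hmet; auto. Qed.
Lemma d_sym x y : d x y = d y x. Proof. apply Hmet. Qed.
Lemma d_tri x y z : d x z <= d x y + d y z. Proof. apply Hmet. Qed.

Notation gr := (gromov d x0).
Notation cm := (chain_min d x0).
Notation CV := (chain_values d x0).
Notation G := (gromov' d x0).

Lemma gr_ge0 x y : 0 <= gr x y.
Proof. unfold gromov. pose proof (d_tri x x0 y); pose proof (d_sym x x0); lra. Qed.
Lemma gr_le x y : gr x y <= d x0 x.
Proof. unfold gromov. pose proof (d_tri x0 x y); lra. Qed.
Lemma gr_sym x y : gr x y = gr y x.
Proof. unfold gromov. rewrite (d_sym x y); lra. Qed.

Lemma cm_le a l : l <> nil -> cm a l <= d x0 a.
Proof.
  intros Hl. destruct l as [|b l']; [congruence|]. simpl. destruct l'.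
  - apply gr_le.
  - eapply Rle_trans; [apply Rmin_l|apply gr_le].
Qed.

Lemma last_cons {A : Type} (b a : A) l : l <> nil -> last (b :: l) a = last l a.
Proof. destruct l; [congruence|reflexivity]. Qed.

Lemma last_def {A : Type} (l : list A) a b : l <> nil -> last l a = last l b.
Proof.
  induction l as [|x l IH]; [congruence|]. intros _.
  destruct l; [reflexivity|]. rewrite !last_cons by congruence. apply IH; congruence.
Qed.

Lemma last_app' {A : Type} (l1 l2 : list A) a : l2 <> nil -> last (l1 ++ l2) a = last l2 a.
Proof.
  intros H. induction l1 as [|x l1 IH]; [reflexivity|].
  change ((x :: l1) ++ l2) with (x :: (l1 ++ l2)). rewrite last_cons; auto.
  destruct l1; destruct l2; simpl; congruence.
Qed.

Lemma cm_app a l1 l2 : l1 <> nil -> l2 <> nil ->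
  cm a (l1 ++ l2) = Rmin (cm a l1) (cm (last l1 a) l2).
Proof.
  revert a. induction l1 as [|b l1 IH]; intros a H1 H2; [congruence|].
  destruct l1 as [|b' l1'].
  - simpl. destruct l2; [congruence|]. reflexivity.
  - change ((b :: b' :: l1') ++ l2) with (b :: ((b' :: l1') ++ l2)).
    change (cm a (b :: (b' :: l1') ++ l2)) with (Rmin (gr a b) (cm b ((b' :: l1') ++ l2))).
    change (cm a (b :: b' :: l1')) with (Rmin (gr a b) (cm b (b' :: l1'))).
    rewrite IH by congruence. rewrite Rmin_assoc. f_equal.
    rewrite (last_cons b a (b' :: l1')) by congruence. f_equal. apply last_def; congruence.
Qed.

Lemma CV_bound x y r : CV x y r -> r <= d x0 x.
Proof. intros [l [Hl [_ ->]]]. apply cm_le; auto. Qed.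
Lemma CV_base x y : CV x y (gr x y).
Proof. exists (y :: nil). split; [congruence|]. split; reflexivity. Qed.
Lemma CV_app x y z r1 r2 : CV x y r1 -> CV y z r2 -> CV x z (Rmin r1 r2).
Proof.
  intros [l1 [H1 [E1 ->]]] [l2 [H2 [E2 ->]]]. exists (l1 ++ l2). split.
  { destruct l1; [congruence|]. simpl; congruence. }
  split.
  - rewrite last_app' by auto. rewrite (last_def l2 x y); auto.
  - rewrite cm_app by auto. rewrite E1. reflexivity.
Qed.
Lemma CV_rev x y r : CV x y r -> CV y x r.
Proof.
  intros [l [Hl [El ->]]]. revert x El. induction l as [|b l IH]; intros x El; [congruence|].
  destruct l as [|b' l'].
  - simpl in El. subst y. simpl. rewrite gr_sym. apply CV_base.
  - change (cm x (b :: b' :: l')) with (Rmin (gr x b) (cm b (b' :: l'))).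
    rewrite Rmin_comm. apply CV_app with b.
    + apply IH; [congruence|]. rewrite <- El. rewrite (last_cons b x (b' :: l')) by congruence.
      apply last_def; congruence.
    + rewrite gr_sym. apply CV_base.
Qed.

Lemma G_ub x y r : CV x y r -> r <= G x y.
Proof. apply (lub_props (CV x y) (gr x y) (d x0 x) (CV_base x y) (CV_bound x y)). Qed.
Lemma G_lub x y M : (forall r, CV x y r -> r <= M) -> G x y <= M.
Proof. apply (lub_props (CV x y) (gr x y) (d x0 x) (CV_base x y) (CV_bound x y)). Qed.

Lemma G_ge_gr x y : gr x y <= G x y. Proof. apply G_ub, CV_base. Qed.
Lemma G_ge0 x y : 0 <= G x y. Proof. eapply Rle_trans; [apply gr_ge0|apply G_ge_gr]. Qed.
Lemma G_le x y : G x y <= d x0 x. Proof. apply G_lub, CV_bound. Qed.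
Lemma G_sym x y : G x y = G y x.
Proof.
  apply Rle_antisym; apply G_lub; intros r Hr; apply G_ub, CV_rev; auto.
Qed.
Lemma G_um x y z : Rmin (G x y) (G y z) <= G x z.
Proof.
  assert (C : forall r1, CV x y r1 -> r1 <= G x z \/ G y z <= G x z).
  { intros r1 H1. destruct (Rle_dec r1 (G x z)) as [|Hn]; [left; auto|right].
    apply G_lub. intros r2 H2. pose proof (G_ub _ _ _ (CV_app _ _ _ _ _ H1 H2)).
    unfold Rmin in H. destruct (Rle_dec _ _); lra. }
  destruct (classic (G y z <= G x z)).
  - eapply Rle_trans; [apply Rmin_r|auto].
  - eapply Rle_trans; [apply Rmin_l|]. apply G_lub. intros r Hr.
    destruct (C r Hr); auto; contradiction.
Qed.
Lemma G_xx x : G x x = d x0 x.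
Proof.
  apply Rle_antisym; [apply G_le|]. pose proof (G_ge_gr x x). unfold gromov in H.
  rewrite d_xx in H. lra.
Qed.
Lemma G_x0 z : G x0 z = 0.
Proof. apply Rle_antisym; [|apply G_ge0]. pose proof (G_le x0 z). rewrite d_xx in H; auto. Qed.

Notation dp := (dprime d x0).
Lemma dpE x y : dp x y = d x0 x + d x0 y - 2 * G x y. Proof. reflexivity. Qed.
Lemma dp_ge0 x y : 0 <= dp x y.
Proof. rewrite dpE. pose proof (G_le x y); pose proof (G_le y x); rewrite G_sym in H0. lra. Qed.
Lemma dp_sym x y : dp x y = dp y x.
Proof. rewrite !dpE, G_sym; lra. Qed.
Lemma dp_tri x y z : dp x z <= dp x y + dp y z.
Proof.
  rewrite !dpE. pose proof (G_um x y z). pose proof (G_le y z). pose proof (G_le y x).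
  rewrite (G_sym y x) in H1. unfold Rmin in H; destruct (Rle_dec _ _); lra.
Qed.
Lemma dp_xx x : dp x x = 0. Proof. rewrite dpE, G_xx; lra. Qed.
Lemma dp_x0 z : dp x0 z = d x0 z. Proof. rewrite dpE, G_x0, d_xx; lra. Qed.
Lemma dp_equiv z z' : dp z z' = 0 -> d x0 z = d x0 z' /\ forall u, G z u = G z' u.
Proof.
  intros H. assert (Hd : d x0 z = d x0 z').
  { pose proof (dp_tri x0 z z'); pose proof (dp_tri x0 z' z); rewrite !dp_x0 in *.
    pose proof (dp_sym z z'). lra. }
  split; auto. intros u. pose proof (dp_tri z z' u); pose proof (dp_tri z' z u).
  pose proof (dp_sym z z'). rewrite !dpE in *. lra.
Qed.

Definition cls (z : X) : TX d x0 := exist _ (fun w => dp z w = 0) (ex_intro _ z eq_refl).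
Notation rep := (TX_rep d x0).

Lemma rep_spec A : proj1_sig A = (fun w => dp (rep A) w = 0).
Proof. unfold TX_rep. destruct (constructive_indefinite_description _ _); simpl; auto. Qed.

Lemma rep_cls z : dp z (rep (cls z)) = 0.
Proof.
  pose proof (rep_spec (cls z)) as H. simpl in H.
  assert (E := f_equal (fun F => F (rep (cls z))) H). simpl in E. rewrite E. apply dp_xx.
Qed.

Lemma TX_eq A B : dp (rep A) (rep B) = 0 -> A = B.
Proof.
  intros H. assert (E : proj1_sig A = proj1_sig B).
  { rewrite !rep_spec. apply functional_extensionality. intros w.
    apply propositional_extensionality. pose proof (dp_tri (rep A) (rep B) w).
    pose proof (dp_tri (rep B) (rep A) w). pose proof (dp_ge0 (rep A) w).
    pose proof (dp_ge0 (rep B) w). pose proof (dp_sym (rep A) (rep B)). split; intros; lra. }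
  destruct A as [PA HA], B as [PB HB]. simpl in E. subst PB. f_equal. apply proof_irrelevance.
Qed.

End Inst.

Theorem proposition3p8 (X : Type) (d : X -> X -> R)
  (Hmet : is_metric d) (Hgeo : geodesic_space d) (x0 : X) :
  @is_Rtree (TX d x0) (dstar d x0).
Proof.
  pose (NN := fun A => d x0 (TX_rep d x0 A)).
  pose (PP := fun A B => gromov' d x0 (TX_rep d x0 A) (TX_rep d x0 B)).
  pose (geo := fun a => proj1_sig (constructive_indefinite_description _ (Hgeo x0 a))).
  pose (seg := fun A t => cls X d x0 (geo (TX_rep d x0 A) t)).
  apply (abs_Rtree (TX d x0) (dstar d x0) NN PP seg).
  - intros; reflexivity.
  - intros; unfold PP; apply G_sym; auto.
  - intros; unfold PP; apply G_um; auto.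
  - intros; unfold PP, NN; apply G_le; auto.
  - intros; unfold PP; apply G_ge0; auto.
  - intros; unfold PP, NN; apply G_xx; auto.
  - intros z w H. apply TX_eq; auto.
  - intros A t Ht. unfold NN in Ht.
    set (a := TX_rep d x0 A) in *.
    assert (Hg : geo a 0 = x0 /\ geo a (d x0 a) = a /\ isometric_on d (d x0 a) (geo a)).
    { unfold geo. destruct (constructive_indefinite_description _ _); simpl; auto. }
    destruct Hg as [Hg0 [Hga Hiso]].
    set (z := geo a t).
    assert (Hz := rep_cls X d x0 Hmet z).
    destruct (dp_equiv X d x0 Hmet _ _ Hz) as [E1 E2].
    assert (Hdz : d x0 z = t).
    { unfold z. rewrite <- Hg0 at 1. rewrite Hiso by lra. rewrite Rminus_0_l, Rabs_Ropp, Rabs_right; lra. }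
    assert (Hza : d z a = d x0 a - t).
    { unfold z. rewrite <- Hga at 2. rewrite Hiso by lra. rewrite Rabs_left1; lra. }
    unfold NN, PP, seg. change (TX_rep d x0 A) with a. fold z. rewrite <- E1. split; [auto|]. rewrite <- E2.
    eapply Rle_trans; [|apply G_ge_gr; auto]. unfold gromov. lra.
Qed.
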